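(* CTL*$_{cd}$ has a tree-like model property: every satisfiable CTL*$_{cd}$ state formula $\varphi$ is satisfied (i.e. $\mathcal K\models\varphi$) by some Kripke structure $\mathcal K$ that is a tree with back edges.
   Context: A Kripke structure over a finite set $AP$ of atomic propositions is a tuple $\mathcal K=(AP,W,R,L,w_I)$ where $W$ is a countable non-empty set of worlds, $w_I\in W$ is the initial world, $R\subseteq W\times W$ is a left-total transition relation (every world has at least one $R$-successor), and $L:W\to 2^{AP}$ is a labelling function. A path is an infinite sequence $\pi=\pi_0\pi_1\cdots$ of worlds with $(\pi_i,\pi_{i+1})\in R$ for all $i\in\mathbb N$; $\mathrm{Pth}(w)$ is the set of paths with $\pi_0=w$. A path $\pi$ is a cycle if for every $i\in\mathbb N$ there is $j>i$ with $\pi_j=\pi_0$ (i.e. $\pi_0$ occurs infinitely often in $\pi$); $\mathrm{Cyc}(w)$ is the set of cycles with $\pi_0=w$. Syntax of CTL*$_{cd}$: state formulas $\varphi::=p\mid\neg\varphi\mid\varphi\wedge\varphi\mid\varphi\vee\varphi\mid \mathsf E\psi\mid\mathsf A\psi\mid\mathsf E^{c}\psi\mid\mathsf A^{c}\psi$ with $p\in AP$; path formulas $\psi::=\varphi\mid\neg\psi\mid\psi\wedge\psi\mid\psi\vee\psi\mid\mathsf X\psi\mid\psi\,\mathsf U\,\psi$. Semantics: $\mathcal K,w\models p$ iff $p\in L(w)$; Boolean connectives as usual; $\mathcal K,w\models\mathsf E\psi$ iff some $\pi\in\mathrm{Pth}(w)$ has $\mathcal K,\pi,0\models\psi$; $\mathcal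 K,w\models\mathsf A\psi$ iff every $\pi\in\mathrm{Pth}(w)$ has $\mathcal K,\pi,0\models\psi$; $\mathcal K,w\models\mathsf E^{c}\psi$ iff some $\pi\in\mathrm{Cyc}(w)$ has $\mathcal K,\pi,0\models\psi$; $\mathcal K,w\models\mathsf A^{c}\psi$ iff every $\pi\in\mathrm{Cyc}(w)$ has $\mathcal K,\pi,0\models\psi$. For paths: $\mathcal K,\pi,i\models\varphi$ (state formula) iff $\mathcal K,\pi_i\models\varphi$; Boolean connectives as usual; $\mathcal K,\pi,i\models\mathsf X\psi$ iff $\mathcal K,\pi,i+1\models\psi$; $\mathcal K,\pi,i\models\psi_1\mathsf U\psi_2$ iff there is $k\ge0$ with $\mathcal K,\pi,i+k\models\psi_2$ and $\mathcal K,\pi,i+j\models\psi_1$ for all $0\le j<k$. $\mathcal K\models\varphi$ iff $\mathcal K,w_I\models\varphi$. A state formula is satisfiable if $\mathcal K\models\varphi$ for some Kripke structure $\mathcal K$. A Kripke structure $\mathcal K=(AP,W,R,L,w_I)$ is a tree with back edges if there exist a relation $R_0\subseteq W\times W$ and a partial map $f:W\to W$ such that: (i) $(W,R_0)$ is a tree with root $w_I$ ($R_0$ being the child relation); (ii) $R=R_0\cup\{(w,f(w)) : w\in\mathrm{dom}(f)\}$; (iii) for every $w\in\mathrm{dom}(f)$, $f(w)$ is an ancestor of $w$ in the tree, i.e. $(f(w),w)\in R_0^+$ (with $R_0^+$ the transitive closure of $R_0$); (iv) for all $w_1,w_2\in W$, if $f(w_1)$ is defined and $(f(w_2),w_1)\in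 R_0^+$ and $(w_1,w_2)\in R_0^+$, then $f(w_1)=f(w_2)$. *)

(* Defs.v *)
From Stdlib Require Import List Relations.
Set Implicit Arguments.

Record Kripke (AP : Type) := mkKripke {
  W : Type;
  R : W -> W -> Prop;
  L : W -> AP -> Prop;
  wI : W;
  W_countable : exists enc : W -> nat, forall x y, enc x = enc y -> x = y;
  R_total : forall w, exists v, R w v
}.

Arguments W {AP}.
Arguments R {AP}.
Arguments L {AP}.
Arguments wI {AP}.

Definition is_path {AP} (K : Kripke AP) (pi : nat -> W K) : Prop :=
  forall i, R K (pi i) (pi (S i)).

Definition is_cycle {AP} (K : Kripke AP) (pi : nat -> W K) : Prop :=
  is_path K pi /\ forall i, exists j, i < j /\ pi j = pi 0.

Inductive sform (AP : Type) : Type :=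
| SAtom : AP -> sform AP
| SNot : sform AP -> sform AP
| SAnd : sform AP -> sform AP -> sform AP
| SOr : sform AP -> sform AP -> sform AP
| SE : pform AP -> sform AP
| SA : pform AP -> sform AP
| SEc : pform AP -> sform AP
| SAc : pform AP -> sform AP
with pform (AP : Type) : Type :=
| PState : sform AP -> pform AP
| PNot : pform AP -> pform AP
| PAnd : pform AP -> pform AP -> pform AP
| POr : pform AP -> pform AP -> pform AP
| PX : pform AP -> pform AP
| PU : pform AP -> pform AP -> pform AP.

Fixpoint sat_state {AP} (K : Kripke AP) (w : W K) (phi : sform AP) {struct phi} : Prop :=
  match phi with
  | SAtom p => L K w p
  | SNot phi1 => ~ sat_state K w phi1
  | SAnd phi1 phi2 => sat_state K w phi1 /\ sat_state K w phi2
  | SOr phi1 phi2 => sat_state K w phi1 \/ sat_state K w phi2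
  | SE psi => exists pi, is_path K pi /\ pi 0 = w /\ sat_path K pi 0 psi
  | SA psi => forall pi, is_path K pi -> pi 0 = w -> sat_path K pi 0 psi
  | SEc psi => exists pi, is_cycle K pi /\ pi 0 = w /\ sat_path K pi 0 psi
  | SAc psi => forall pi, is_cycle K pi -> pi 0 = w -> sat_path K pi 0 psi
  end
with sat_path {AP} (K : Kripke AP) (pi : nat -> W K) (i : nat) (psi : pform AP)
  {struct psi} : Prop :=
  match psi with
  | PState phi => sat_state K (pi i) phi
  | PNot psi1 => ~ sat_path K pi i psi1
  | PAnd psi1 psi2 => sat_path K pi i psi1 /\ sat_path K pi i psi2
  | POr psi1 psi2 => sat_path K pi i psi1 \/ sat_path K pi i psi2
  | PX psi1 => sat_path K pi (S i) psi1
  | PU psi1 psi2 =>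
      exists k, sat_path K pi (i + k) psi2 /\
                (forall j, j < k -> sat_path K pi (i + j) psi1)
  end.

Definition models {AP} (K : Kripke AP) (phi : sform AP) : Prop :=
  sat_state K (wI K) phi.

Definition satisfiable {AP} (phi : sform AP) : Prop :=
  exists K : Kripke AP, models K phi.

Definition is_rooted_tree {X : Type} (R0 : X -> X -> Prop) (r : X) : Prop :=
  (forall w, ~ R0 w r) /\
  (forall w, w <> r -> exists! p, R0 p w) /\
  (forall w, clos_refl_trans X R0 r w).

Definition tree_with_back_edges {AP} (K : Kripke AP) : Prop :=
  exists (R0 : W K -> W K -> Prop) (f : W K -> option (W K)),
    is_rooted_tree R0 (wI K) /\
    (forall u v, R K u v <-> (R0 u v \/ f u = Some v)) /\
    (forall w v, f w = Some v -> clos_trans (W K) R0 v w) /\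
    (forall w1 w2 v1 v2, f w1 = Some v1 -> f w2 = Some v2 ->
        clos_trans (W K) R0 v2 w1 -> clos_trans (W K) R0 w1 w2 -> v1 = v2).

(* Main.v *)
Require Import Defs.
From Stdlib Require Import List Relations Lia Arith PeanoNat.
From Stdlib Require Import ClassicalEpsilon ProofIrrelevance FunctionalExtensionality.
From Stdlib Require Cantor.

Scheme sform_mind := Induction for sform Sort Prop
with pform_mind := Induction for pform Sort Prop.

Lemma equiv_sat {AP} (K1 K2 : Kripke AP) (g : W K1 -> W K2)
  (HL : forall u p, L K1 u p <-> L K2 (g u) p)
  (HR : forall u v, R K1 u v -> R K2 (g u) (g v))
  (HP : forall u pi, is_path K2 pi -> pi 0 = g u ->
        exists pi', is_path K1 pi' /\ pi' 0 = u /\ forall i, g (pi' i) = pi i)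
  (HC : forall u pi, is_cycle K2 pi -> pi 0 = g u ->
        exists pi', is_cycle K1 pi' /\ pi' 0 = u /\ forall i, g (pi' i) = pi i) :
  forall phi u, sat_state K1 u phi <-> sat_state K2 (g u) phi.
Proof.
  assert (Hpm : forall pi, is_path K1 pi -> is_path K2 (fun k => g (pi k))).
  { intros pi Hp i. apply HR, Hp. }
  assert (Hcm : forall pi, is_cycle K1 pi -> is_cycle K2 (fun k => g (pi k))).
  { intros pi [Hp Hc]. split. apply Hpm, Hp. intros i. destruct (Hc i) as [j [Hj Hj']].
    exists j. split; auto. rewrite Hj'. reflexivity. }
  apply (sform_mind AP
    (fun phi => forall u, sat_state K1 u phi <-> sat_state K2 (g u) phi)
    (fun psi => forall pi i, sat_path K1 pi i psi <-> sat_path K2 (fun k => g (pi k)) i psi));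
  simpl.
  - intros; apply HL.
  - intros s IH u. specialize (IH u). tauto.
  - intros s1 IH1 s2 IH2 u. specialize (IH1 u). specialize (IH2 u). tauto.
  - intros s1 IH1 s2 IH2 u. specialize (IH1 u). specialize (IH2 u). tauto.
  - intros p IH u. split.
    + intros [pi [Hp [H0 Hs]]]. exists (fun k => g (pi k)). split; [apply Hpm; auto|].
      split; [rewrite H0; auto|]. apply IH; auto.
    + intros [pi [Hp [H0 Hs]]]. destruct (HP u pi Hp H0) as [pi' [Hp' [H0' Hg]]].
      exists pi'. split; [auto|split; [auto|]]. apply IH.
      replace (fun k => g (pi' k)) with pi by (extensionality k; symmetry; apply Hg). exact Hs.
  - intros p IH u. split.
    + intros H pi Hp H0. destruct (HP u pi Hp H0) as [pi' [Hp' [H0' Hg]]].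
      replace pi with (fun k => g (pi' k)) by (extensionality k; apply Hg).
      apply IH. apply H; auto.
    + intros H pi Hp H0. apply IH. apply H. apply Hpm; auto. rewrite H0; auto.
  - intros p IH u. split.
    + intros [pi [Hp [H0 Hs]]]. exists (fun k => g (pi k)). split; [apply Hcm; auto|].
      split; [rewrite H0; auto|]. apply IH; auto.
    + intros [pi [Hp [H0 Hs]]]. destruct (HC u pi Hp H0) as [pi' [Hp' [H0' Hg]]].
      exists pi'. split; [auto|split; [auto|]]. apply IH.
      replace (fun k => g (pi' k)) with pi by (extensionality k; symmetry; apply Hg). exact Hs.
  - intros p IH u. split.
    + intros H pi Hp H0. destruct (HC u pi Hp H0) as [pi' [Hp' [H0' Hg]]].
      replace pi with (fun k => g (pi' k)) by (extensionality k; apply Hg).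
      apply IH. apply H; auto.
    + intros H pi Hp H0. apply IH. apply H. apply Hcm; auto. rewrite H0; auto.
  - intros s IH pi i. apply IH.
  - intros p IH pi i. specialize (IH pi i). tauto.
  - intros p1 IH1 p2 IH2 pi i. specialize (IH1 pi i). specialize (IH2 pi i). tauto.
  - intros p1 IH1 p2 IH2 pi i. specialize (IH1 pi i). specialize (IH2 pi i). tauto.
  - intros p IH pi i. apply IH.
  - intros p1 IH1 p2 IH2 pi i. split; intros [k [H1 H2]]; exists k; split;
      try (apply IH2; auto); intros j Hj; apply IH1; auto.
Qed.

Definition lastw {AP} (K : Kripke AP) (l : list (W K * bool)) : W K :=
  match l with nil => wI K | (y,_)::_ => y end.

Fixpoint valid {AP} (K : Kripke AP) (l : list (W K * bool)) : Prop :=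
  match l with nil => True | (y,_)::p => R K (lastw K p) y /\ valid K p end.

Fixpoint tau {X} (l : list (X * bool)) : option (list (X*bool)) :=
  match l with nil => None | (_,b)::p => if b then Some p else tau p end.

Definition node {AP} (K : Kripke AP) := {l : list (W K * bool) | valid K l}.

Definition gw {AP} (K:Kripke AP) (u : node K) : W K := lastw K (proj1_sig u).

Definition R0 {AP} (K : Kripke AP) (u v : node K) : Prop :=
  exists y b, proj1_sig v = (y,b) :: proj1_sig u.

Definition backP {AP} (K : Kripke AP) (u v : node K) : Prop :=
  tau (proj1_sig u) = Some (proj1_sig v) /\ R K (gw K u) (gw K v).

Definition fb {AP} (K : Kripke AP) (u : node K) : option (node K) :=
  match excluded_middle_informative (exists v, backP K u v) with
  | left H => Some (proj1_sig (constructive_indefinite_description _ H))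
  | right _ => None end.

Lemma node_eq {AP} (K : Kripke AP) (u v : node K) : proj1_sig u = proj1_sig v -> u = v.
Proof. destruct u, v; simpl; intros; subst; f_equal; apply proof_irrelevance. Qed.

Lemma fb_spec {AP} (K : Kripke AP) u v : fb K u = Some v <-> backP K u v.
Proof.
  unfold fb. destruct (excluded_middle_informative _) as [H|H].
  - destruct (constructive_indefinite_description _ H) as [v' Hv']; simpl. split.
    + intros E; inversion E; subst; auto.
    + intros Hb. f_equal. apply node_eq. destruct Hb as [Hb _]; destruct Hv' as [Hv' _].
      rewrite Hb in Hv'. inversion Hv'; auto.
  - split; [discriminate|]. intros Hb; exfalso; apply H; eauto.
Qed.

Definition Rp {AP} (K : Kripke AP) (u v : node K) : Prop := R0 K u v \/ fb K u = Some v.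

Definition root {AP} (K : Kripke AP) : node K := exist (valid K) nil I.

Lemma Rp_total {AP} (K : Kripke AP) : forall u, exists v, Rp K u v.
Proof.
  intros u. destruct (R_total K (gw K u)) as [y Hy].
  exists (exist (valid K) ((y,true) :: proj1_sig u) (conj Hy (proj2_sig u))).
  left. exists y, true. reflexivity.
Qed.

Lemma pinj a b : Cantor.to_nat a = Cantor.to_nat b -> a = b.
Proof. intros E. rewrite <- (Cantor.cancel_of_to a), <- (Cantor.cancel_of_to b), E. reflexivity. Qed.
Arguments Cantor.to_nat : simpl never.

Fixpoint code (l : list (nat * bool)) : nat :=
  match l with nil => 0 | (x,b)::p => S (Cantor.to_nat (Cantor.to_nat (x, if b then 1 else 0), code p)) end.

Lemma code_inj l1 l2 : code l1 = code l2 -> l1 = l2.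
Proof.
  revert l2; induction l1 as [|[x b] l1 IH]; intros [|[y c] l2]; simpl; try discriminate; auto.
  intros E. injection E as E.
  apply pinj in E.
  injection E as E1 E2. apply pinj in E1.
  injection E1 as -> E3. apply IH in E2. subst. destruct b, c; simpl in E3; try discriminate; auto.
Qed.

Lemma node_countable {AP} (K : Kripke AP) :
  exists enc : node K -> nat, forall x y, enc x = enc y -> x = y.
Proof.
  destruct (W_countable K) as [e He].
  exists (fun u => code (map (fun p => (e (fst p), snd p)) (proj1_sig u))).
  intros x y E. apply code_inj in E. apply node_eq.
  revert E. generalize (proj1_sig x) (proj1_sig y). clear x y.
  intros l1; induction l1 as [|[a b] l1 IH]; intros [|[c d] l2]; simpl; try discriminate; auto.
  intros E; injection E as E1 E2 E3. apply He in E1. subst. f_equal. apply IH; auto.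
Qed.

Definition Kp {AP} (K : Kripke AP) : Kripke AP :=
  @mkKripke AP (node K) (Rp K) (fun u p => L K (gw K u) p) (root K) (node_countable K) (Rp_total K).

Lemma ct_char {AP} (K : Kripke AP) (u v : node K) :
  clos_trans _ (R0 K) u v <-> exists pre, pre <> nil /\ proj1_sig v = pre ++ proj1_sig u.
Proof.
  split.
  - induction 1 as [x y [a [b H]]|x y z _ [p1 [N1 E1]] _ [p2 [N2 E2]]].
    + exists ((a,b)::nil). split; [discriminate|]. exact H.
    + exists (p2 ++ p1). split. destruct p2; [contradiction|discriminate].
      rewrite E2, E1, app_assoc. reflexivity.
  - intros [pre [N E]]. revert v E. induction pre as [|[a b] pre IH]; [contradiction|].
    intros v E. destruct pre as [|c pre'].
    + apply t_step. exists a, b. exact E.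
    + assert (Hv : valid K ((c::pre') ++ proj1_sig u)).
      { pose proof (proj2_sig v) as H. simpl in H. rewrite E in H. simpl in H. destruct H as [_ H]. exact H. }
      apply t_trans with (exist _ _ Hv).
      * apply IH; [discriminate|reflexivity].
      * apply t_step. exists a, b. simpl. rewrite E. reflexivity.
Qed.

Lemma tau_suffix {X} (l s : list (X*bool)) : tau l = Some s -> exists pre, pre <> nil /\ l = pre ++ s.
Proof.
  induction l as [|[a b] l IH]; simpl; [discriminate|].
  destruct b.
  - intros E; injection E as <-. exists ((a,true)::nil). split; [discriminate|reflexivity].
  - intros E. destruct (IH E) as [pre [_ ->]]. exists ((a,false)::pre). split; [discriminate|reflexivity].
Qed.

Lemma tau_nest {X} (pre pre1 s : list (X*bool)) :
  pre1 <> nil -> tau (pre ++ pre1 ++ s) = Some s -> tau (pre1 ++ s) = Some s.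
Proof.
  intros N. induction pre as [|[a b] pre IH]; simpl; auto.
  destruct b; auto. intros E; injection E as E.
  apply (f_equal (@length _)) in E. rewrite !length_app in E. destruct pre1; [contradiction|].
  simpl in E. lia.
Qed.

Lemma t_rt {X} (r : X -> X -> Prop) x y : clos_trans X r x y -> clos_refl_trans X r x y.
Proof. induction 1; [apply rt_step; auto | eapply rt_trans; eauto]. Qed.

Lemma Kp_tree {AP} (K : Kripke AP) : tree_with_back_edges (Kp K).
Proof.
  exists (R0 K), (fb K). simpl. split; [|split; [|split]].
  - split; [|split].
    + intros w [y [b E]]. discriminate.
    + intros w Hw. destruct w as [l Hl]. destruct l as [|[y b] p].
      * exfalso; apply Hw; apply node_eq; reflexivity.
      * simpl in Hl. exists (exist _ p (proj2 Hl)). split.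
        -- exists y, b. reflexivity.
        -- intros q [y' [b' E]]. apply node_eq. simpl in *. injection E as _ _ E. auto.
    + intros w. destruct w as [l Hl]. destruct l as [|a p].
      * match goal with |- clos_refl_trans _ _ ?a ?b => replace b with a by (apply node_eq; reflexivity) end. apply rt_refl.
      * apply t_rt. apply ct_char. exists (a::p). split; [discriminate|]. simpl. rewrite app_nil_r. reflexivity.
  - intros; unfold Rp; tauto.
  - intros w v H. apply fb_spec in H. destruct H as [H _]. apply tau_suffix in H.
    apply ct_char. exact H.
  - intros w1 w2 v1 v2 H1 H2 T1 T2. apply fb_spec in H1, H2. destruct H1 as [H1 _], H2 as [H2 _].
    apply ct_char in T1, T2. destruct T1 as [p1 [N1 E1]], T2 as [p2 [N2 E2]].
    apply node_eq. rewrite E2, E1 in H2. apply tau_nest in H2; auto. rewrite <- E1 in H2.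
    rewrite H1 in H2. injection H2; auto.
Qed.

Fixpoint pl {X} (l0 : list (X*bool)) (pi : nat -> X) (i : nat) : list (X*bool) :=
  match i with 0 => l0 | S i' => (pi (S i'), true) :: pl l0 pi i' end.

Lemma pl_inv {AP} (K : Kripke AP) (t : node K) pi :
  is_path K pi -> pi 0 = gw K t ->
  forall i, valid K (pl (proj1_sig t) pi i) /\ lastw K (pl (proj1_sig t) pi i) = pi i.
Proof.
  intros Hp H0 i. induction i as [|i [IHv IHl]]; simpl.
  - split; [apply (proj2_sig t)|symmetry; exact H0].
  - split; auto. split; auto. rewrite IHl. apply Hp.
Qed.

Lemma lift_path {AP} (K : Kripke AP) (t : node K) pi :
  is_path K pi -> pi 0 = gw K t ->
  exists pi', is_path (Kp K) pi' /\ pi' 0 = t /\ forall i, gw K (pi' i) = pi i.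
Proof.
  intros Hp H0.
  exists (fun i => exist (valid K) (pl (proj1_sig t) pi i) (proj1 (pl_inv K t pi Hp H0 i))).
  split; [|split].
  - intros i. left. exists (pi (S i)), true. reflexivity.
  - apply node_eq. reflexivity.
  - intros i. unfold gw. simpl. apply (pl_inv K t pi Hp H0 i).
Qed.

Fixpoint st {X} (l0 : list (X*bool)) (pi : nat -> X) (nxt : nat -> nat) (i : nat)
  : list (X*bool) * nat * nat :=
  match i with
  | 0 => (l0, 0, nxt 0)
  | S i' => let '(l, s, n) := st l0 pi nxt i' in
            if Nat.eqb (S i') n then (l0, S i', nxt (S i'))
            else ((pi (S i'), Nat.eqb i' s) :: l, s, n)
  end.

Lemma st_inv {AP} (K : Kripke AP) (t : node K) pi nxt :
  is_path K pi -> pi 0 = gw K t ->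
  (forall s, S s < nxt s /\ pi (nxt s) = pi 0) ->
  forall i, match st (proj1_sig t) pi nxt i with (l, s, n) =>
    s <= i /\ i < n /\ S s < n /\ pi n = pi 0 /\ pi s = pi 0 /\ valid K l /\
    lastw K l = pi i /\ (i = s -> l = proj1_sig t) /\ (s < i -> tau l = Some (proj1_sig t)) end.
Proof.
  intros Hp H0 Hn i. induction i as [|i IH]; cbn [st].
  - destruct (Hn 0) as [A B]. repeat split; auto; try lia.
    all: try apply (proj2_sig t). all: try (symmetry; auto).
  - destruct (st (proj1_sig t) pi nxt i) as [[l s] n].
    destruct IH as (I1 & I2 & I3 & I4 & I5 & I6 & I7 & I8 & I9).
    destruct (Nat.eqb_spec (S i) n) as [E|E].
    + subst n. destruct (Hn (S i)) as [A B]. repeat split; auto; try lia.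
      all: try apply (proj2_sig t). all: try (unfold gw in H0; rewrite <- H0; auto).
    + repeat split; auto; try lia.
      * rewrite I7. apply Hp.
      * intros _. simpl. destruct (Nat.eqb_spec i s) as [E'|E'].
        -- f_equal. apply I8; auto.
        -- apply I9. lia.
Qed.

Lemma st_stay {X} (l0 : list (X*bool)) pi nxt i l s n :
  st l0 pi nxt i = (l, s, n) -> forall d, i + d < n -> exists l', st l0 pi nxt (i + d) = (l', s, n).
Proof.
  intros E d. induction d as [|d IH]; intros Hd.
  - rewrite Nat.add_0_r. eauto.
  - destruct IH as [l' E']; [lia|]. rewrite Nat.add_succ_r. cbn [st]. rewrite E'.
    destruct (Nat.eqb_spec (S (i + d)) n); [lia|]. eauto.
Qed.

Lemma lift_cycle {AP} (K : Kripke AP) (t : node K) pi :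
  is_cycle K pi -> pi 0 = gw K t ->
  exists pi', is_cycle (Kp K) pi' /\ pi' 0 = t /\ forall i, gw K (pi' i) = pi i.
Proof.
  intros [Hp Hc] H0.
  assert (Hn : forall s, {n | S s < n /\ pi n = pi 0}).
  { intros s. apply constructive_indefinite_description. apply (Hc (S s)). }
  set (nxt := fun s => proj1_sig (Hn s)).
  assert (Hnx : forall s, S s < nxt s /\ pi (nxt s) = pi 0) by (intros s; apply (proj2_sig (Hn s))).
  pose proof (st_inv K t pi nxt Hp H0 Hnx) as Hinv.
  assert (Hv : forall i, valid K (fst (fst (st (proj1_sig t) pi nxt i)))).
  { intros i. specialize (Hinv i). destruct (st (proj1_sig t) pi nxt i) as [[l s] n]. simpl. tauto. }
  exists (fun i => exist (valid K) _ (Hv i)). split; [split|split].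
  - intros i. pose proof (Hinv i) as Hi. generalize (Hv i) (Hv (S i)). cbn [st].
    destruct (st (proj1_sig t) pi nxt i) as [[l s] n] eqn:E.
    destruct Hi as (I1 & I2 & I3 & I4 & I5 & I6 & I7 & I8 & I9).
    destruct (Nat.eqb_spec (S i) n) as [En|En]; intros h1 h2.
    + right. apply fb_spec. split; unfold gw; simpl.
      * apply I9. lia.
      * rewrite I7. unfold gw in H0. rewrite <- H0, <- I4, <- En. apply Hp.
    + left. exists (pi (S i)), (Nat.eqb i s). reflexivity.
  - intros i. pose proof (Hinv i) as Hi.
    destruct (st (proj1_sig t) pi nxt i) as [[l s] n] eqn:E.
    destruct Hi as (I1 & I2 & _).
    destruct (st_stay _ _ _ _ _ _ _ E (n - 1 - i)) as [l' E']; [lia|].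
    exists n. split; auto. apply node_eq. simpl.
    replace n with (S (i + (n - 1 - i))) at 1 by lia. cbn [st]. rewrite E'.
    destruct (Nat.eqb_spec (S (i + (n - 1 - i))) n); [|lia]. reflexivity.
  - apply node_eq. reflexivity.
  - intros i. unfold gw. simpl. specialize (Hinv i).
    destruct (st (proj1_sig t) pi nxt i) as [[l s] n]. simpl. tauto.
Qed.

Theorem mainTheorem4 (AP : Type) (HAP : exists l : list AP, forall a : AP, In a l)
  (phi : sform AP) :
  satisfiable phi ->
  exists K : Kripke AP, tree_with_back_edges K /\ models K phi.
Proof.
  intros [K HK]. exists (Kp K). split; [apply Kp_tree|].
  unfold models. apply (equiv_sat (Kp K) K (gw K)).
  - intros; simpl; tauto.
  - intros u v [[y [b E]]|H].
    + unfold gw. simpl in *. rewrite E. simpl. pose proof (proj2_sig v) as Hv. simpl in Hv.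
      rewrite E in Hv. simpl in Hv. tauto.
    + apply fb_spec in H. apply H.
  - intros; apply lift_path; auto.
  - intros; apply lift_cycle; auto.
  - exact HK.
Qed.
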